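(* Let $M\subseteq V$ and let $SB$ be any satellite bridge for $M$. Then there exist a tree $R$ in $G$ with $M\subseteq N(R)$ and a function $F$ defined on $d^+(R)$ with values in $2^{\{1,\dots,K\}}$ such that (1) for every $u\in d^+(R)$, $F(u)$ is a hitting set of $\{\Gamma(v): v\in nb_R(u)\}$, and (2) $\sum_{u\in d^+(R)}|F(u)|\le |N(SB)|$.
   Context: Let $G=(V,E)$ be a finite, simple, undirected, connected graph with $|V|\ge 2$. Fix a positive integer $K$ and, for every $u\in V$, a nonempty set $\Gamma(u)\subseteq\{1,\dots,K\}$. Let $nb_G(u)$ be the neighbours of $u$ in $G$. For a tree $T$, $N(T)$ is its vertex set, $nb_T(u)$ the neighbours of $u$ in $T$, and $d^+(T)$ the set of vertices of degree greater than one in $T$. A hitting set of a collection $\mathcal C$ of subsets of a finite set $\mathcal F$ is a subset of $\mathcal F$ meeting every member of $\mathcal C$. The extended graph $\widetilde G=(\widetilde V,\widetilde E)$ of $G$: (i) initially $\widetilde V=V$, $\widetilde E=\emptyset$; (ii) for each $u\in V$ and each $i\in\bigcup_{v\in nb_G(u)}\Gamma(v)$, add a new vertex $\lambda(u,i)$ (satellite node of $u$; $u$ is its nuclear node); $\Psi(u)$ is the set of satellite nodes of $u$; (iii) for each $u\in V$, join every pair of distinct vertices of $\Psi(u)\cup\{u\}$; (iv) for each edge $\{u,v\}\in E$ (in each orientation $(u,v)$), each $i\in\Gamma(v)$, $j\in\Gamma(u)$, add edges $\{\lambda(u,i),\lambda(v,j)\}$, $\{\lambda(u,i),v\}$, $\{u,\lambda(v,j)\}$.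 $V_S=\widetilde V\setminus V$ is the set of satellite nodes. Given $M\subseteq V$, a satellite bridge is a (nonempty) subtree $SB$ of $\widetilde G$ all of whose vertices are satellite nodes and such that every vertex of $M$ is adjacent in $\widetilde G$ to at least one vertex of $SB$. *)

(* Defs.v *)
From mathcomp Require Import all_boot.
Set Implicit Arguments. Unset Strict Implicit. Unset Printing Implicit Defensive.

(* A subgraph is given by a vertex set Nd and a set Ed of unordered edges,
   each edge being a 2-element set [set x; y]. *)
Definition tadj (T : finType) (Ed : {set {set T}}) : rel T :=
  fun x y => [set x; y] \in Ed.

(* (Nd, Ed) is a tree in the graph with adjacency e: nonempty, every edge is
   an edge of the graph between vertices of Nd, connected, and |Ed| = |Nd| - 1
   (a connected graph with |E| = |V| - 1 is exactly a tree). *)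
Definition is_tree (T : finType) (e : rel T) (Nd : {set T}) (Ed : {set {set T}}) : Prop :=
  [/\ Nd != set0,
      (forall E, E \in Ed -> exists x y,
           [/\ x \in Nd, y \in Nd, x != y, e x y & E = [set x; y]]),
      (forall x y, x \in Nd -> y \in Nd -> connect (tadj Ed) x y)
    & #|Ed| = (#|Nd| - 1)%N].

Definition nbT (T : finType) (Ed : {set {set T}}) (u : T) : {set T} :=
  [set v | tadj Ed u v].

Definition dplus (T : finType) (Nd : {set T}) (Ed : {set {set T}}) : {set T} :=
  [set u in Nd | 1 < #|nbT Ed u|].

(* Colours {1,...,K} are represented by 'I_K (colour c+1 ~ ordinal c).
   Vertices of the extended graph live in V + (V * 'I_K):
   inl u = the nuclear node u, inr (u,i) = the satellite node lambda(u,i). *)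
Definition extV (V : finType) (K : nat) := (V + (V * 'I_K))%type.

Section Ext.
Variables (V : finType) (e : rel V) (K : nat) (Gamma : V -> {set 'I_K}).

(* lambda(u,i) is created iff i \in \bigcup_{v in nb_G(u)} Gamma(v) *)
Definition sat_ok (u : V) (i : 'I_K) : bool := [exists v, e u v && (i \in Gamma v)].

Definition ext_vertex (x : extV V K) : bool :=
  match x with inl _ => true | inr (u, i) => sat_ok u i end.

Definition is_satellite (x : extV V K) : bool :=
  match x with inl _ => false | inr (u, i) => sat_ok u i end.

(* generating (oriented) edges: step (iii) for nuclear node u, and step (iv)
   for the oriented edge (u,v) *)
Definition ext_gen (x y : extV V K) : bool :=
  match x, y with
  | inl u, inl v => false
  | inl u, inr (w, i) =>
      (* (iii): u -- lambda(u,i) *)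
      ((w == u) && sat_ok w i)
      (* (iv): u -- lambda(v,j) for (u,v) in E, j in Gamma(u) *)
      || (e u w && (i \in Gamma u))
  | inr (u, i), inl v =>
      (* (iv): lambda(u,i) -- v for (u,v) in E, i in Gamma(v) *)
      e u v && (i \in Gamma v)
  | inr (u, i), inr (w, j) =>
      (* (iii): pairs of distinct satellites of u *)
      [&& u == w, i != j, sat_ok u i & sat_ok u j]
      (* (iv): lambda(u,i) -- lambda(v,j), (u,v) in E, i in Gamma(v), j in Gamma(u) *)
      || [&& e u w, i \in Gamma w & j \in Gamma u]
  end.

Definition ext_edge : rel (extV V K) := fun x y => ext_gen x y || ext_gen y x.

Definition satellite_bridge (M : {set V}) (S : {set extV V K})
    (ES : {set {set extV V K}}) : Prop :=
  [/\ is_tree ext_edge S ES,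
      (forall x, x \in S -> is_satellite x)
    & (forall m, m \in M -> exists2 s, s \in S & ext_edge (inl m) s)].

End Ext.

(* Main.v *)
Require Import Defs.
From mathcomp Require Import all_boot.
Set Implicit Arguments. Unset Strict Implicit. Unset Printing Implicit Defensive.

Lemma set2_eq (T : finType) (a b c d : T) :
  [set a; b] = [set c; d] -> (a = c /\ b = d) \/ (a = d /\ b = c).
Proof.
move=> E.
have ha : a \in [set c; d] by rewrite -E !inE eqxx.
have hb : b \in [set c; d] by rewrite -E !inE eqxx orbT.
have hc : c \in [set a; b] by rewrite E !inE eqxx.
have hd : d \in [set a; b] by rewrite E !inE eqxx orbT.
move: ha hb hc hd; rewrite !inE.
case/orP=>/eqP ha; case/orP=>/eqP hb; case/orP=>/eqP hc; case/orP=>/eqP hd;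
  subst; auto.
Qed.

Lemma tadj_sym (T : finType) (Ed : {set {set T}}) : symmetric (tadj Ed).
Proof. by move=> x y; rewrite /tadj setUC. Qed.

Lemma crossing (T : finType) (r : rel T) (B : {set T}) p x :
  x \in B -> path r x p -> last x p \notin B ->
  exists u v, [/\ u \in B, v \notin B & r u v].
Proof.
elim: p x => [|y p IH] x xB /=; first by rewrite xB.
case/andP=> rxy py ly.
case: (boolP (y \in B)) => yB; first exact: IH yB py ly.
by exists x, y.
Qed.

Lemma grow (T : finType) (r : rel T) (A : {set T}) (a0 : T) :
  a0 \in A ->
  (forall x y, r x y -> (x \in A) && (y \in A)) ->
  (forall x y, x \in A -> y \in A -> connect r x y) ->
  exists Ed : {set {set T}},
    [/\ (forall E, E \in Ed -> exists x y, [/\ x \in A, y \in A, r x y & E = [set x; y]]),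
        (forall x y, x \in A -> y \in A -> connect (tadj Ed) x y)
      & #|Ed| = (#|A| - 1)%N].
Proof.
move=> a0A rA Acon.
have key : forall n, n < #|A| -> exists (B : {set T}) (Ed : {set {set T}}),
   [/\ B \subset A, #|B| = n.+1,
    (forall E, E \in Ed -> exists x y, [/\ x \in B, y \in B, r x y & E = [set x; y]]),
    (forall x y, x \in B -> y \in B -> connect (tadj Ed) x y) & #|Ed| = n].
  elim=> [|n IH] hn.
    exists [set a0], set0; split.
    - by rewrite sub1set.
    - by rewrite cards1.
    - by move=> E; rewrite inE.
    - by move=> x y; rewrite !inE => /eqP-> /eqP->; exact: connect0.
    - by rewrite cards0.
  have [B [Ed [BA cB EdB Bcon cEd]]] := IH (ltnW hn).
  have : ~~ (A \subset B).
    apply/negP => AB; have := subset_leq_card AB; rewrite cB leqNgt.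
    by move/negP; apply.
  case/subsetPn => a aA aB.
  have : B != set0 by rewrite -card_gt0 cB.
  case/set0Pn => b bB.
  have /connectP[p pp lp] := Acon b a (subsetP BA b bB) aA.
  have [x [y [xB yB rxy]]] := crossing bB pp (ltac:(by rewrite -lp)).
  exists (y |: B), ([set x; y] |: Ed); split.
  - rewrite subUset sub1set BA andbT.
    by case/andP: (rA _ _ rxy).
  - by rewrite cardsU1 yB cB.
  - move=> E; rewrite in_setU1 => /orP[/eqP->|/EdB[u [v [uB vB ruv ->]]]].
      by exists x, y; rewrite !inE eqxx xB orbT.
    by exists u, v; rewrite !inE uB vB !orbT.
  - have mono : forall u v, connect (tadj Ed) u v -> connect (tadj ([set x; y] |: Ed)) u v.
      apply: connect_sub => u v huv; apply: connect1.
      by rewrite /tadj in_setU1; apply/orP; right.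
    have xy : connect (tadj ([set x; y] |: Ed)) x y.
      by apply: connect1; rewrite /tadj in_setU1 eqxx.
    have yx : connect (tadj ([set x; y] |: Ed)) y x.
      by apply: connect1; rewrite /tadj in_setU1 setUC eqxx.
    move=> u v; rewrite !inE => /orP[/eqP->|uB] /orP[/eqP->|vB].
    + exact: connect0.
    + exact: connect_trans yx (mono _ _ (Bcon _ _ xB vB)).
    + exact: connect_trans (mono _ _ (Bcon _ _ uB xB)) xy.
    + exact: mono (Bcon _ _ uB vB).
  - rewrite cardsU1 cEd.
    have -> : [set x; y] \notin Ed => //.
    apply/negP => /EdB[u [v [uB vB _ E]]].
    have : y \in [set u; v] by rewrite -E !inE eqxx orbT.
    by rewrite !inE => /orP[]/eqP Ey; move: yB; rewrite Ey ?uB ?vB.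
have A0 : 0 < #|A| by rewrite card_gt0; apply/set0Pn; exists a0.
have [B [Ed [BA cB EdB Bcon cEd]]] := key (#|A| - 1) (ltac:(by rewrite subn1 prednK // ltnSn)).
have eBA : B = A.
  apply/eqP; rewrite eqEcard BA cB subn1 prednK //=.
exists Ed; rewrite -eBA; split => //; by rewrite cEd eBA.
Qed.

Theorem lemma4 (V : finType) (e : rel V) (K : nat) (Gamma : V -> {set 'I_K})
  (e_sym : symmetric e) (e_irr : irreflexive e)
  (G_conn : forall u v : V, connect e u v)
  (V_ge2 : 1 < #|V|)
  (Gamma_ne : forall u, Gamma u != set0)
  (M : {set V}) (S : {set extV V K}) (ES : {set {set extV V K}})
  (SB : satellite_bridge e Gamma M S ES) :
  exists (NR : {set V}) (ER : {set {set V}}),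
    [/\ is_tree e NR ER, M \subset NR &
      exists F : V -> {set 'I_K},
        (forall u, u \in dplus NR ER ->
           forall v, v \in nbT ER u -> F u :&: Gamma v != set0)
        /\ \sum_(u in dplus NR ER) #|F u| <= #|S|].
Proof.
move: SB => [[Sne ESedge Scon cES] Ssat Mcov].
pose U : {set V} := [set u | [exists i, (inr (u, i) : extV V K) \in S]].
pose F : V -> {set 'I_K} := fun u => [set i | (inr (u, i) : extV V K) \in S].
pose H : rel V := fun u w => e u w && [exists i, exists j,
   [&& (inr (u, i) : extV V K) \in S, (inr (w, j) : extV V K) \in S,
       i \in Gamma w & j \in Gamma u]].
have HU : forall x y, H x y -> (x \in U) && (y \in U).
  move=> x y /andP[_ /existsP[i /existsP[j /and4P[hi hj _ _]]]].
  by rewrite !inE; apply/andP; split; apply/existsP; [exists i | exists j].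
have satS : forall a, a \in S -> exists u i, a = inr (u, i).
  move=> [a|[u i]] aS; last by exists u, i.
  by have := Ssat _ aS.
have [u0 u0U] : exists u0, u0 \in U.
  case/set0Pn: Sne => s sS; have [u [i Es]] := satS _ sS.
  by exists u; rewrite inE; apply/existsP; exists i; rewrite -Es.
have tadjS : forall a b, tadj ES a b -> [/\ a \in S, b \in S & (a = b \/ ext_edge e Gamma a b)].
  move=> a b /ESedge[x [y [xS yS _ exy E]]].
  case: (set2_eq E) => [[-> ->]|[-> ->]]; split => //; right => //.
  by rewrite /ext_edge orbC.
have stepH : forall u i w k, tadj ES (inr (u, i)) (inr (w, k)) -> u = w \/ H u w.
  move=> u i w k /tadjS[uS wS [[-> _]|ed]]; first by left.
  case: (eqVneq u w) => [->|uw]; first by left.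
  right; move: ed; rewrite /ext_edge /=.
  have hH : forall i k, (inr (u, i) : extV V K) \in S -> (inr (w, k) : extV V K) \in S ->
     e u w -> i \in Gamma w -> k \in Gamma u -> H u w.
    move=> i' k' h1 h2 h3 h4 h5; rewrite /H h3 /=.
    by apply/existsP; exists i'; apply/existsP; exists k'; rewrite h1 h2 h4 h5.
  case/orP => /orP[/and4P[/eqP E]|/and3P[h1 h2 h3]].
  - by rewrite E eqxx in uw.
  - exact: hH uS wS h1 h2 h3.
  - by rewrite E eqxx in uw.
  - by apply: hH uS wS _ h3 h2; rewrite e_sym.
have Ucon : forall u v, u \in U -> v \in U -> connect H u v.
  move=> u v; rewrite !inE => /existsP[i ui] /existsP[j vj].
  have /connectP[p pp lp] := Scon _ _ ui vj.
  elim: p u i ui pp lp => [|b p IH] u i ui /=.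
    by move=> _ [-> _]; exact: connect0.
  case/andP=> tb pb lb.
  have [_ bS _] := tadjS _ _ tb.
  have [w [k Eb]] := satS _ bS; subst b.
  have := IH w k bS pb lb.
  case: (stepH _ _ _ _ tb) => [->//|huw hw].
  exact: connect_trans (connect1 huw) hw.
have [E0 [E0e E0con cE0]] := grow u0U HU Ucon.
pose L : {set V} := M :\: U.
have LU : forall l, l \in L -> l \notin U by move=> l; rewrite inE => /andP[].
pose P l w := (w \in U) && e w l && (F w :&: Gamma l != set0).
have Pex : forall l, l \in L -> exists w, P l w.
  move=> l lL; have := lL; rewrite inE => /andP[lnU lM].
  have [s sS hs] := Mcov _ lM.
  have [w [k Es]] := satS _ sS; subst s.
  have wU : w \in U by rewrite inE; apply/existsP; exists k.
  move: hs; rewrite /ext_edge /= => /orP[/orP[/andP[/eqP Ew _]|/andP[elw hk]]|/andP[ewl hk]].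
  - by rewrite -Ew wU in lnU.
  - exists w; rewrite /P wU e_sym elw /=; apply/set0Pn; exists k.
    by rewrite !inE sS hk.
  - exists w; rewrite /P wU ewl /=; apply/set0Pn; exists k.
    by rewrite !inE sS hk.
pose par l := odflt l [pick w | P l w].
have parP : forall l, l \in L -> P l (par l).
  move=> l lL; rewrite /par; case: pickP => [w //|none].
  by have [w pw] := Pex l lL; rewrite none in pw.
have parU : forall l, l \in L -> par l \in U.
  by move=> l /parP /andP[/andP[]].
have parE : forall l, l \in L -> e (par l) l.
  by move=> l /parP /andP[/andP[]].
have parF : forall l, l \in L -> F (par l) :&: Gamma l != set0.
  by move=> l /parP /andP[].
pose LE : {set {set V}} := [set [set par l; l] | l in L].
pose NR := U :|: L.
pose ER := E0 :|: LE.
have nbL : forall l, l \in L -> nbT ER l \subset [set par l].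
  move=> l lL; apply/subsetP => w; rewrite !inE /tadj in_setU => /orP[].
    move=> /E0e[x [y [xU yU _ E]]].
    have : l \in [set x; y] by rewrite -E !inE eqxx.
    by rewrite !inE => /orP[]/eqP El; move: (LU _ lL); rewrite El ?xU ?yU.
  case/imsetP => l' l'L /set2_eq [[E1 E2]|[E1 E2]].
    by move: (LU _ lL); rewrite E1 parU.
  by subst l'; rewrite E2.
have Hhit : forall u v, H u v -> (F u :&: Gamma v != set0) && (F v :&: Gamma u != set0).
  move=> u v /andP[_ /existsP[i /existsP[j /and4P[hi hj gi gj]]]].
  by apply/andP; split; apply/set0Pn; [exists i | exists j]; rewrite !inE ?hi ?hj ?gi ?gj.
have mono : forall x y, connect (tadj E0) x y -> connect (tadj ER) x y.
  apply: connect_sub => x y hxy; apply: connect1.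
  by rewrite /tadj in_setU; apply/orP; left.
have con0 : forall x, x \in NR -> connect (tadj ER) u0 x.
  move=> x; rewrite in_setU => /orP[xU|xL]; first exact: mono (E0con _ _ u0U xU).
  apply: connect_trans (mono _ _ (E0con _ _ u0U (parU _ xL))) _.
  apply: connect1; rewrite /tadj in_setU; apply/orP; right.
  by apply/imsetP; exists x.
have disjUL : [disjoint U & L].
  by rewrite -setI_eq0; apply/eqP/setP => x; rewrite !inE andbA andbN.
have disjE : [disjoint E0 & LE].
  rewrite -setI_eq0; apply/eqP/setP => E; rewrite !inE.
  apply/negP => /andP[/E0e[x [y [xU yU _ ->]]] /imsetP[l lL E1]].
  have : l \in [set x; y] by rewrite E1 !inE eqxx orbT.
  by rewrite !inE => /orP[]/eqP El; move: (LU _ lL); rewrite El ?xU ?yU.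
have cLE : #|LE| = #|L|.
  apply: card_in_imset => l l' lL l'L /set2_eq [[_ ->]//|[E1 E2]].
  by move: (LU _ l'L); rewrite -E1 parU.
have cU : 0 < #|U| by rewrite card_gt0; apply/set0Pn; exists u0.
exists NR, ER; split.
- split.
  + by apply/set0Pn; exists u0; rewrite in_setU u0U.
  + move=> E; rewrite in_setU => /orP[/E0e[x [y [xU yU hxy ->]]]|/imsetP[l lL ->]].
      exists x, y; rewrite !in_setU xU yU /=; split => //; last by case/andP: hxy.
      by apply/negP => /eqP xy; case/andP: hxy; rewrite xy e_irr.
    exists (par l), l; rewrite !in_setU parU //= lL orbT; split => //; last exact: parE.
    by apply/negP => /eqP pl; move: (LU _ lL); rewrite -pl parU.
  + move=> x y xN yN; apply: connect_trans (con0 _ yN).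
    by rewrite (sym_connect_sym (@tadj_sym _ ER)); apply: con0.
  + rewrite /ER /NR !cardsU (disjoint_setI0 disjUL) (disjoint_setI0 disjE) !cards0 !subn0.
    by rewrite cE0 cLE addnC addnBA // addnC.
- apply/subsetP => m mM; rewrite in_setU; case: (boolP (m \in U)) => //= mU.
  by rewrite inE mU mM.
exists F; split.
- move=> u; rewrite inE => /andP[uN du] v; rewrite inE /tadj in_setU.
  case/orP => [/E0e[x [y [_ _ hxy E]]]|/imsetP[l lL E]].
    case: (set2_eq E) => [[-> ->]|[-> ->]]; by case/andP: (Hhit _ _ hxy).
  case: (set2_eq E) => [[-> ->]|[El _]]; first exact: parF.
  subst u; have := subset_leq_card (nbL _ lL); rewrite cards1 => h.
  by rewrite ltnNge h in du.
- apply: (@leq_trans (\sum_u #|F u|)).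
    rewrite [X in _ <= X](bigID (mem (dplus NR ER))) /=; exact: leq_addr.
  pose Ps : {set V * 'I_K} := [set x | (inr x : extV V K) \in S].
  have SPs : S = [set inr x | x in Ps].
    apply/setP => a; apply/idP/imsetP => [aS|[x xP ->]].
      by have [u [i Ea]] := satS _ aS; exists (u, i); rewrite // inE -Ea.
    by rewrite inE in xP.
  have -> : #|S| = #|Ps|.
    by rewrite SPs card_imset // => x y [].
  rewrite -sum1_card.
  have -> : \sum_u #|F u| = \sum_u \sum_(i | (inr (u, i) : extV V K) \in S) 1.
    by apply: eq_bigr => u _; rewrite sum1_card cardsE.
  rewrite pair_big_dep /=; apply/eq_leq/eq_bigl => -[u i] /=; by rewrite inE.
Qed.
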